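(* Fix integers $N\geq 1$ and $r\geq 0$. Let $d=(d_0,d_1,\dots,d_N)\in\mathbb Z^{N+1}$ be a degree sequence (i.e. $d_{j+1}>d_j$ for all $j$) with $d_0=0$ and $d_N\leq N+r$. For $0\leq i\leq N$ define \[ \beta_i(\pi_d):=\frac{\prod_{j\neq 0} d_j}{\prod_{i'\neq i}|d_i-d_{i'}|}, \] where the products run over $j\in\{1,\dots,N\}$ and $i'\in\{0,\dots,N\}\setminus\{i\}$. Then for every $0\leq i\leq N$, \[ \binom{N}{i}\cdot N^{-r}\;\leq\;\beta_i(\pi_d)\;\leq\;\binom{N}{i}\cdot N^{r}. \]
   Context: The numbers $\beta_i(\pi_d)$ are the nonzero entries $\beta_{i,d_i}$ of the pure diagram $\pi_d$ of type $d$ (normalized so that $\beta_0(\pi_d)=1$), a Betti table whose only nonzero entry in homological degree $i$ is in internal degree $d_i$. *)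

(* Defs.v *)
From mathcomp Require Import all_boot all_order all_algebra.
Set Implicit Arguments. Unset Strict Implicit. Unset Printing Implicit Defensive.
Import Order.TTheory GRing.Theory Num.Theory.
Local Open Scope ring_scope.

Definition degree_seq (N : nat) (d : 'I_N.+1 -> int) : Prop :=
  forall j k : 'I_N.+1, (j < k)%N -> d j < d k.

Definition beta_pure (N : nat) (d : 'I_N.+1 -> int) (i : 'I_N.+1) : rat :=
  (\prod_(j < N.+1 | j != ord0) (d j)%:~R) /
  (\prod_(i' < N.+1 | i' != i) (`|d i - d i'|)%:~R).

(* Main.v *)
Require Import Defs.
From mathcomp Require Import all_boot all_order all_algebra.
From mathcomp Require Import zify ring lra.
Import Order.TTheory GRing.Theory Num.Theory.
Local Open Scope ring_scope.

Lemma nat_bern (a k : nat) : ((a + k) * k ^ a <= k * k.+1 ^ a)%N.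
Proof.
elim: a => [|a IH]; first by rewrite expn0 add0n muln1.
have h : (k ^ a <= k.+1 ^ a)%N.
  by elim: (a) => // b IHb; rewrite !expnS leq_mul.
rewrite !expnS. nia.
Qed.

Lemma lerX (x y : rat) n : 0 <= x -> x <= y -> x ^+ n <= y ^+ n.
Proof.
move=> x0 xy; elim: n => [|n IH]; first by rewrite !expr0.
by rewrite !exprS ler_pM // exprn_ge0.
Qed.

Lemma fac (a k : nat) : (0 < k)%N ->
  ((a + k)%:R / k%:R : rat) <= (k.+1%:R / k%:R) ^+ a.
Proof.
move=> k0.
rewrite expr_div_n ler_pdivlMr ?exprn_gt0 ?ltr0n // mulrAC ler_pdivrMr ?ltr0n //.
by rewrite -!natrX -!natrM ler_nat [X in (_ <= X)%N]mulnC nat_bern.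
Qed.

Lemma prodP (a m n : nat) : (0 < m <= n)%N ->
  \prod_(m <= j < n) ((a + j)%:R / j%:R : rat) <= (n%:R / m%:R) ^+ a.
Proof.
case/andP=> m0; elim: n => [|n IH] mn.
  by move: m0; rewrite leqn0 in mn; rewrite (eqP mn).
case: (ltngtP m n.+1) mn => // [mn _|<- _]; last first.
  by rewrite big_geq // divff ?expr1n // pnatr_eq0 -lt0n.
rewrite big_nat_recr //=.
have n0 : (0 < n)%N by lia.
apply: le_trans (ler_pM _ _ (IH mn) (fac a n n0)) _.
- by apply: prodr_ge0 => j _; rewrite divr_ge0 ?ler0n.
- by rewrite divr_ge0 ?ler0n.
rewrite -exprMn; apply: lerX; first by rewrite mulr_ge0 // divr_ge0 ?ler0n.
rewrite mulrC mulrA mulfVK ?pnatr_eq0 -?lt0n //.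
Qed.

Lemma binP (i k : nat) :
  \prod_(i.+1 <= j < (i + k).+1) (j%:R / (j - i)%:R : rat) = ('C(i + k, i))%:R.
Proof.
elim: k => [|k IH]; first by rewrite addn0 big_geq // binn.
rewrite addnS big_nat_recr /=; last by rewrite ltnS leq_addr.
rewrite IH.
have h := mul_bin_down (i + k).+1 i; rewrite /= in h.
have e : ((i + k).+1 - i = k.+1)%N by lia.
rewrite e in h *.
apply: (mulIf (x := k.+1%:R)); first by rewrite pnatr_eq0.
rewrite -mulrA divfK ?pnatr_eq0 // -!natrM; congr (_%:R); lia.
Qed.

Lemma revP (i : nat) (F : nat -> rat) :
  \prod_(1 <= j < i) F (i - j)%N = \prod_(1 <= j < i) F j.
Proof.
rewrite big_nat_rev /=; apply: eq_big_nat => j /andP[j1 ji]; congr F; lia.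
Qed.

Lemma splitP (N : nat) (i : 'I_N.+1) (F : nat -> rat) : (0 < i)%N ->
  \prod_(j < N.+1 | (0 < j)%N && (j != i :> nat)) F j =
  \prod_(1 <= j < i) F j * \prod_(i.+1 <= j < N.+1) F j.
Proof.
move=> i0.
rewrite -(big_mkord (fun j => (0 < j)%N && (j != i :> nat)) F).
rewrite (big_cat_nat _ (n := i)) //=; last by rewrite ltnW.
rewrite (big_ltn_cond i0) /= (big_ltn_cond (ltn_ord i)) /= eqxx andbF.
congr (_ * _); rewrite big_mkcond /=; apply: eq_big_nat => j /andP[j1 j2].
  have -> : (0 < j)%N && (j != i :> nat) by apply/andP; split; lia.
  by [].
have -> : (0 < j)%N && (j != i :> nat) by apply/andP; split; lia.
by [].
Qed.

Lemma gapn (N : nat) (d : 'I_N.+1 -> int) : degree_seq d ->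
  forall k : nat, (k <= N)%N -> forall j : 'I_N.+1, (j <= k)%N ->
  (k%:Z - (j : nat)%:Z <= d (inord k) - d j).
Proof.
move=> ds; elim=> [|k IH] kN j jk.
  have j0 : j = inord 0 by apply: val_inj; rewrite /= inordK //; lia.
  by rewrite -j0 subrr; move: jk; rewrite leqn0 => /eqP ->.
case: (ltngtP j k.+1) jk => // [jk _|jk _]; last first.
  have -> : (inord k.+1 : 'I_N.+1) = j by apply: val_inj; rewrite /= inordK.
  rewrite subrr; lia.
have h1 := IH (ltnW kN) j jk.
have h2 : d (inord k) < d (inord k.+1).
  by apply: ds; rewrite !inordK //; lia.
lia.
Qed.

Lemma gap (N : nat) (d : 'I_N.+1 -> int) : degree_seq d ->
  forall j k : 'I_N.+1, (j <= k)%N ->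
  ((k : nat)%:Z - (j : nat)%:Z <= d k - d j).
Proof.
move=> ds j k jk; have := @gapn N d ds k (leq_ord k) j jk; by rewrite inord_val.
Qed.
Lemma natcast (n : nat) : (n%:R : rat) = (n%:Z)%:~R.
Proof. by rewrite pmulrn. Qed.

Lemma divle (p q s t : int) : 0 < q -> 0 < t -> p * t <= s * q ->
  (p%:~R / q%:~R : rat) <= s%:~R / t%:~R.
Proof.
move=> q0 t0 h.
rewrite ler_pdivlMr ?ltr0z // mulrAC ler_pdivrMr ?ltr0z //.
by rewrite -!intrM ler_int.
Qed.

Lemma invP (a m n : nat) : (0 < m <= n)%N ->
  ((n%:R / m%:R) ^+ a)^-1 <= \prod_(m <= j < n) (j%:R / (a + j)%:R : rat).
Proof.
move=> h; have := prodP a m n h.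
have -> : \prod_(m <= j < n) (j%:R / (a + j)%:R : rat) =
          (\prod_(m <= j < n) ((a + j)%:R / j%:R))^-1.
  rewrite -prodfV; apply: eq_big_nat => j _; by rewrite invf_div.
case/andP: h => m0 mn.
rewrite lef_pV2 // posrE.
  apply: exprn_gt0; apply: divr_gt0; rewrite ltr0n //; lia.
rewrite big_seq_cond; apply: prodr_gt0 => j /andP[]; rewrite mem_index_iota => /andP[j1 j2] _.
apply: divr_gt0; rewrite ltr0n; lia.
Qed.

Lemma beta_form (N : nat) (d : 'I_N.+1 -> int) (i : 'I_N.+1) :
  (forall j : 'I_N.+1, (0 < j)%N -> 0 < d j) -> d ord0 = 0 -> (0 < i)%N ->
  beta_pure d i = \prod_(j < N.+1 | (0 < j)%N && (j != i :> nat))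
                    ((d j)%:~R / (`|d i - d j|)%:~R).
Proof.
move=> dp d0 i0; rewrite /beta_pure (bigD1 i) /=; last by apply: contraTneq i0 => ->.
rewrite [X in _ / X](bigD1 ord0) /=; last by rewrite eq_sym; apply: contraTneq i0 => ->.
rewrite d0 subr0 gtr0_norm ?dp // invfM mulrACA divff ?mulr1s; last first.
  by rewrite intr_eq0 gt_eqF ?dp.
rewrite mul1r prodf_div; congr (_ / _); apply: eq_bigl => j; rewrite lt0n //.
by rewrite andbC.
Qed.

Theorem lemma3p1 (N r : nat) (d : 'I_N.+1 -> int) :
  (1 <= N)%N ->
  degree_seq d ->
  d ord0 = 0 ->
  d ord_max <= (N + r)%:Z ->
  forall i : 'I_N.+1,
    ('C(N, i))%:R / (N%:R ^+ r) <= beta_pure d i :> rat /\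
    beta_pure d i <= ('C(N, i))%:R * (N%:R ^+ r) :> rat.
Proof.
move=> N1 ds d0 dN i.
have dlo : forall j : 'I_N.+1, (j : nat)%:Z <= d j.
  move=> j; have := @gap N d ds ord0 j (leq0n _); rewrite d0 /=; lia.
have dhi : forall j : 'I_N.+1, d j <= (j : nat)%:Z + r%:Z.
  move=> j; have := @gap N d ds j ord_max (leq_ord j); rewrite /=; lia.
have dp : forall j : 'I_N.+1, (0 < j)%N -> 0 < d j.
  move=> j j0; have := dlo j; lia.
have Npos : 0 < (N%:R : rat) by rewrite ltr0n.
have NXpos : 0 < (N%:R : rat) ^+ r by rewrite exprn_gt0.
have NX1 : 1 <= (N%:R : rat) ^+ r by rewrite exprn_ege1 // ler1n.
case: (posnP i) => [i0 | i0].
  have -> : i = ord0 by apply: val_inj.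
  have -> : beta_pure d ord0 = 1.
    rewrite /beta_pure d0.
    have -> : \prod_(i' < N.+1 | i' != ord0) (`|0 - d i'|%:~R : rat) =
              \prod_(j < N.+1 | j != ord0) (d j)%:~R.
      apply: eq_bigr => j j0; rewrite sub0r normrN gtr0_norm // dp //.
      by rewrite lt0n; exact: j0.
    rewrite divff //; apply/lt0r_neq0/prodr_gt0 => j j0; rewrite ltr0z dp //.
    by rewrite lt0n; exact: j0.
  rewrite bin0 !mul1r; split; last by [].
  by rewrite invf_le1.
set a := `|d i - (i : nat)%:Z|%N.
have ha : d i = (i : nat)%:Z + a%:Z.
  rewrite /a gez0_abs; first lia.
  have := dlo i; lia.
have ar : (a <= r)%N by have := dhi i; lia.
set b := (r - a)%N.
have iN : (i <= N)%N by rewrite -ltnS ltn_ord.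
rewrite beta_form //.
split.
  pose Hf j := if (j < i)%N then (j%:R / (a + (i - j))%:R : rat)
               else j%:R / ((j - i) + b)%:R.
  have L : \prod_(j < N.+1 | (0 < j)%N && (j != i :> nat)) Hf j <=
           \prod_(j < N.+1 | (0 < j)%N && (j != i :> nat))
              ((d j)%:~R / (`|d i - d j|)%:~R).
    apply: ler_prod => j /andP[j0 ji]; rewrite /Hf; case: ifP => jlt.
      apply/andP; split; first by rewrite divr_ge0 ?ler0n.
      have g := @gap N d ds j i (ltnW jlt).
      have := dlo j; have := dhi j.
      rewrite gtr0_norm; last by lia.
      rewrite !natcast; move=> h1 h2; apply: divle; nia.
    have ij : (i < j)%N by move: ji jlt; rewrite neq_ltn => /orP[] ->.
    apply/andP; split; first by rewrite divr_ge0 ?ler0n.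
    have g := @gap N d ds i j (ltnW ij).
    have := dlo j; have := dhi j.
    rewrite ltr0_norm; last by lia.
    rewrite opprB !natcast; move=> h1 h2; apply: divle; nia.
  apply: le_trans L; rewrite splitP //.
  have -> : \prod_(1 <= j < i) Hf j = \prod_(1 <= j < i) (j%:R / (a + (i - j))%:R : rat).
    by apply: eq_big_nat => j /andP[_ h]; rewrite /Hf h.
  have -> : \prod_(i.+1 <= j < N.+1) Hf j =
            \prod_(i.+1 <= j < N.+1) (j%:R / ((j - i) + b)%:R : rat).
    by apply: eq_big_nat => j /andP[h _]; rewrite /Hf ltnNge ltnW.
  rewrite prodf_div.
  have -> : \prod_(1 <= j < i) ((a + (i - j))%:R : rat) = \prod_(1 <= j < i) (a + j)%:R.
    exact: (revP i (fun k => (a + k)%:R)).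
  rewrite -prodf_div.
  have -> : \prod_(i.+1 <= j < N.+1) (j%:R / ((j - i) + b)%:R : rat) =
     \prod_(i.+1 <= j < N.+1) (j%:R / (j - i)%:R) *
     \prod_(i.+1 <= j < N.+1) ((j - i)%:R / (b + (j - i))%:R).
    rewrite -big_split; apply: eq_big_nat => j /andP[h1 h2] /=.
    rewrite mulrA divfK; first by rewrite addnC.
    rewrite pnatr_eq0; lia.
  have -> : \prod_(i.+1 <= j < N.+1) (j%:R / (j - i)%:R : rat) = 'C(N, i)%:R.
    by have := binP i (N - i); rewrite subnKC.
  have -> : \prod_(i.+1 <= j < N.+1) ((j - i)%:R / (b + (j - i))%:R : rat) =
            \prod_(1 <= k < N.+1 - i) (k%:R / (b + k)%:R).
    rewrite -{1}[i.+1]add1n big_addn; apply: eq_big_nat => k _; by rewrite addnK.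
  have L1 := invP a 1 i (i0).
  have L2 : (0 < 1 <= N.+1 - i)%N by lia.
  have {}L2 := invP b 1 (N.+1 - i) L2.
  set P1 := \prod_(1 <= j < i) _ in L1 *.
  set P2 := \prod_(1 <= k < N.+1 - i) _ in L2 *.
  have P1' : ((N%:R : rat) ^+ a)^-1 <= P1.
    apply: le_trans L1; rewrite divr1 lef_pV2 ?posrE ?exprn_gt0 ?ltr0n //.
    by apply: lerX; rewrite ?ler0n ?ler_nat.
  have P2' : ((N%:R : rat) ^+ b)^-1 <= P2.
    apply: le_trans L2; rewrite divr1 lef_pV2 ?posrE ?exprn_gt0 ?ltr0n //; last by lia.
    by apply: lerX; rewrite ?ler0n ?ler_nat //; lia.
  have rab : r = (a + b)%N by lia.
  rewrite rab exprD invfM mulrCA; apply: ler_pM.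
  - by rewrite invr_ge0 exprn_ge0 ?ler0n.
  - by rewrite mulr_ge0 ?ler0n // invr_ge0 exprn_ge0 ?ler0n.
  - exact: P1'.
  - by apply: ler_wpM2l; rewrite ?ler0n.
pose Gf j := if (j < i)%N then ((a + j)%:R / (i - j)%:R : rat)
             else (a + j)%:R / (j - i)%:R.
have U : \prod_(j < N.+1 | (0 < j)%N && (j != i :> nat))
              ((d j)%:~R / (`|d i - d j|)%:~R) <=
         \prod_(j < N.+1 | (0 < j)%N && (j != i :> nat)) Gf j.
  apply: ler_prod => j /andP[j0 ji]; rewrite /Gf.
  apply/andP; split.
    by rewrite divr_ge0 // ler0z ?normr_ge0 // ltW // dp.
  case: ifP => jlt.
    have g := @gap N d ds j i (ltnW jlt).
    have := dlo j; have := dhi j.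
    rewrite gtr0_norm; last by lia.
    rewrite !natcast; move=> h1 h2; apply: divle; nia.
  have ij : (i < j)%N by move: ji jlt; rewrite neq_ltn => /orP[] ->.
  have g := @gap N d ds i j (ltnW ij).
  have := dlo j; have := dhi j.
  rewrite ltr0_norm; last by lia.
  rewrite opprB !natcast; move=> h1 h2; apply: divle; nia.
apply: le_trans U _; rewrite splitP //.
have -> : \prod_(1 <= j < i) Gf j = \prod_(1 <= j < i) ((a + j)%:R / (i - j)%:R : rat).
  by apply: eq_big_nat => j /andP[_ h]; rewrite /Gf h.
have -> : \prod_(i.+1 <= j < N.+1) Gf j =
          \prod_(i.+1 <= j < N.+1) ((a + j)%:R / (j - i)%:R : rat).
  by apply: eq_big_nat => j /andP[h _]; rewrite /Gf ltnNge ltnW.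
rewrite prodf_div.
have -> : \prod_(1 <= j < i) ((i - j)%:R : rat) = \prod_(1 <= j < i) j%:R.
  exact: (revP i (fun k => k%:R)).
rewrite -prodf_div.
have -> : \prod_(i.+1 <= j < N.+1) ((a + j)%:R / (j - i)%:R : rat) =
   \prod_(i.+1 <= j < N.+1) ((a + j)%:R / j%:R) *
   \prod_(i.+1 <= j < N.+1) (j%:R / (j - i)%:R).
  rewrite -big_split; apply: eq_big_nat => j /andP[h1 h2] /=.
  rewrite mulrA divfK //; rewrite pnatr_eq0; lia.
have -> : \prod_(i.+1 <= j < N.+1) (j%:R / (j - i)%:R : rat) = 'C(N, i)%:R.
  by have := binP i (N - i); rewrite subnKC.
have U1 := prodP a 1 i i0.
have U2 : (0 < i.+1 <= N.+1)%N by lia.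
have {}U2 := prodP a i.+1 N.+1 U2.
rewrite mulrA [X in _ <= X]mulrC; apply: ler_wpM2r; first by rewrite ler0n.
apply: le_trans (ler_pM _ _ U1 U2) _.
- by apply: prodr_ge0 => j _; rewrite divr_ge0 ?ler0n.
- by apply: prodr_ge0 => j _; rewrite divr_ge0 ?ler0n.
rewrite -exprMn; apply: (le_trans (y := (N%:R : rat) ^+ a)).
  apply: lerX; first by rewrite mulr_ge0 ?divr_ge0 ?ler0n.
  rewrite divr1 mulrA ler_pdivrMr ?ltr0n // -!natrM ler_nat; nia.
by apply: ler_weXn2l; rewrite ?ler1n.
Qed.
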